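(* Let a (continuous) fibration of $\mathbb R^n$ by oriented affine $k$-planes be given, with $q=n-k$, and let $p\colon\mathbb R^n\to\mathbb R^n$ send each point $x$ to the point of the fiber through $x$ nearest to the origin. Then the base space $p(\mathbb R^n)$ is a connected, contractible, $q$-dimensional submanifold of $\mathbb R^n$.
   Context: A fibration of $\mathbb R^n$ by oriented affine $k$-planes is a family of pairwise disjoint oriented affine $k$-planes covering $\mathbb R^n$ which forms a locally trivial bundle, i.e. the map sending a point to its fiber is continuous; fibers need not be skew. *)

(* Defs.v *)
From HB Require Import structures.
From mathcomp Require Import all_boot all_order all_algebra.
From mathcomp Require Import all_classical all_reals all_analysis.
Set Implicit Arguments. Unset Strict Implicit. Unset Printing Implicit Defensive.
Import Order.TTheory GRing.Theory Num.Theory.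
Import numFieldNormedType.Exports.
Local Open Scope classical_set_scope.
Local Open Scope ring_scope.

Section Defs.
Variables (R : realType) (n k : nat).

(* The affine k-plane  a + rowspace(E)  (E has k rows; it is a k-plane when
   row_free E). *)
Definition aplane (a : 'rV[R]_n) (E : 'M[R]_(k, n)) : set 'rV[R]_n :=
  [set y | (y - a <= E)%MS].

(* (a,E) and (b,F) present the same ORIENTED affine plane: same point set
   and the change of (ordered) basis from E to F has positive determinant. *)
Definition same_oplane (a : 'rV[R]_n) (E : 'M[R]_(k, n))
    (b : 'rV[R]_n) (F : 'M[R]_(k, n)) : Prop :=
  (b - a <= E)%MS /\ exists M : 'M[R]_k, 0 < \det M /\ F = M *m E.

(* L x = (a, E) presents the oriented fiber through x.  A fibration of R^n
   by oriented affine k-planes: every fiber is a k-plane through x, fibers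
   that meet coincide as oriented planes (pairwise disjoint family covering
   R^n), and x |-> fiber is continuous (for the topology of the space of
   oriented affine k-planes, i.e. locally it admits continuous presentations
   by a base point and an oriented frame). *)
Definition oriented_affine_fibration
    (L : 'rV[R]_n -> 'rV[R]_n * 'M[R]_(k, n)) : Prop :=
  [/\ (forall x, row_free (L x).2),
      (forall x, aplane (L x).1 (L x).2 x),
      (forall x y, (aplane (L x).1 (L x).2 `&` aplane (L y).1 (L y).2) !=set0 ->
          same_oplane (L x).1 (L x).2 (L y).1 (L y).2) &
      (forall x0, exists U : set 'rV[R]_n, [/\ open U, U x0 &
          exists (a : 'rV[R]_n -> 'rV[R]_n) (E : 'rV[R]_n -> 'M[R]_(k, n)),
            [/\ {within U, continuous a}, {within U, continuous E} &
                forall y, U y -> row_free (E y) /\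
                  same_oplane (L y).1 (L y).2 (a y) (E y)]])].

Definition sqnorm (v : 'rV[R]_n) : R := \sum_(i < n) v ord0 i ^+ 2.

Definition nearest_point_map (L : 'rV[R]_n -> 'rV[R]_n * 'M[R]_(k, n))
    (p : 'rV[R]_n -> 'rV[R]_n) : Prop :=
  forall x, aplane (L x).1 (L x).2 (p x) /\
    forall z, aplane (L x).1 (L x).2 z -> sqnorm (p x) <= sqnorm z.

End Defs.

Definition contractible (R : realType) (T : topologicalType) (A : set T) : Prop :=
  exists (b : T) (H : R * T -> T),
    [/\ A b,
        {within [set t : R | 0 <= t <= 1] `*` A, continuous H},
        (forall t x, 0 <= t <= 1 -> A x -> A (H (t, x))) &
        (forall x, A x -> H (0, x) = x /\ H (1, x) = b)].

(* A is a q-dimensional (topological, embedded) submanifold of R^n: each point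
   of A has an open neighbourhood U in R^n with A `&` U homeomorphic to an open
   subset of R^q. *)
Definition top_submanifold (R : realType) (n q : nat) (A : set 'rV[R]_n) : Prop :=
  forall b, A b -> exists (U : set 'rV[R]_n) (V : set 'rV[R]_q)
    (phi : 'rV[R]_q -> 'rV[R]_n) (psi : 'rV[R]_n -> 'rV[R]_q),
    [/\ open U /\ U b, open V,
        {within V, continuous phi} /\ {within A `&` U, continuous psi},
        (forall v, V v -> (A `&` U) (phi v) /\ psi (phi v) = v) &
        (forall y, (A `&` U) y -> V (psi y) /\ phi (psi y) = y)].

(* Main.v *)
Require Import Defs.
From HB Require Import structures.
From mathcomp Require Import all_boot all_order all_algebra.
From mathcomp Require Import all_classical all_reals all_analysis.
Import Order.TTheory GRing.Theory Num.Theory.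
Import numFieldNormedType.Exports.
Local Open Scope classical_set_scope.
Local Open Scope ring_scope.

Set Implicit Arguments. Unset Strict Implicit.
Section S.
Variable R : realType.
Lemma mx_cvgP {T} {F : set_system T} {FF : Filter F} m n (f : T -> 'M[R]_(m,n)) (A : 'M[R]_(m,n)) :
 (forall i j, (fun x => f x i j) @ F --> A i j) -> f @ F --> A.
Proof.
move=> H S /= [P PA sPS].
change (F (f @^-1` S)).
have := @filter_forall T ('I_m * 'I_n)%type (fun ij x => P ij.1 ij.2 (f x ij.1 ij.2)) F FF.
move=> /(_ _) G; apply: filterS (G _).
  by move=> x Hx; apply: sPS => i j; exact: (Hx (i, j)).
by move=> [i j]; exact: (H i j _ (PA i j)).
Qed.

Lemma entry_cvg {T} {F : set_system T} {FF : Filter F} m n (f : T -> 'M[R]_(m,n)) (A : 'M[R]_(m,n)) i j :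
  f @ F --> A -> (fun x => f x i j) @ F --> A i j.
Proof. by move=> H; exact: (cvg_comp _ _ H (@coord_continuous R m n i j A)). Qed.

Lemma cvg_mulmx {T} {F : set_system T} {FF : Filter F} m n p (f : T -> 'M[R]_(m,n))
  (g : T -> 'M[R]_(n,p)) (A : 'M[R]_(m,n)) (B : 'M[R]_(n,p)) :
  f @ F --> A -> g @ F --> B -> (fun x => f x *m g x) @ F --> A *m B.
Proof.
move=> Hf Hg; apply: mx_cvgP => i j; rewrite mxE.
under eq_cvg do rewrite mxE.
apply: (@cvg_big R _ +%R 0 xpredT add_continuous T F _ (fun l x => f x i l * g x l j)) => // l _.
by apply: cvgM; apply: entry_cvg.
Qed.

Lemma cvg_det {T} {F : set_system T} {FF : Filter F} n (f : T -> 'M[R]_n) (A : 'M[R]_n) :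
  f @ F --> A -> (fun x => \det (f x)) @ F --> \det A.
Proof.
move=> Hf; rewrite /determinant; under eq_cvg do rewrite /determinant.
apply: (cvg_big add_continuous) => // s _.
apply: cvgM; first exact: cvg_cst.
apply: (cvg_big mul_continuous) => // i _.
exact: entry_cvg.
Qed.

Lemma cvg_adj {T} {F : set_system T} {FF : Filter F} n (f : T -> 'M[R]_n) (A : 'M[R]_n) :
  f @ F --> A -> (fun x => \adj (f x)) @ F --> \adj A.
Proof.
move=> Hf; apply: mx_cvgP => i j; rewrite mxE; under eq_cvg do rewrite mxE.
rewrite /cofactor.
apply: cvgM; first exact: cvg_cst.
apply: cvg_det; apply: mx_cvgP => k l; rewrite !mxE; under eq_cvg do rewrite !mxE.
exact: entry_cvg.
Qed.

Lemma cvg_invmx {T} {F : set_system T} {FF : Filter F} n (f : T -> 'M[R]_n) (A : 'M[R]_n) :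
  A \in unitmx -> f @ F --> A -> (fun x => invmx (f x)) @ F --> invmx A.
Proof.
move=> uA Hf.
have Hd : (fun x => \det (f x)) @ F --> \det A by apply: cvg_det.
have dA : \det A != 0 by rewrite -unitfE -unitmxE.
have ev := cvgr_neq0 _ Hd dA.
have H2 : (fun x => (\det (f x))^-1 *: \adj (f x)) @ F --> invmx A.
  rewrite /invmx uA; apply: cvgZ; last exact: cvg_adj.
  exact: cvgV.
apply: cvg_trans H2; apply: near_eq_cvg. apply: filterS (ev FF) => x dx.
by rewrite /invmx unitmxE unitfE dx.
Qed.

Lemma sqnormE n (v : 'rV[R]_n) : sqnorm v = (v *m v^T) 0 0.
Proof. by rewrite /sqnorm mxE; apply: eq_bigr => i _; rewrite mxE expr2. Qed.

Lemma sqnorm_ge0 n (v : 'rV[R]_n) : 0 <= sqnorm v.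
Proof. by apply: sumr_ge0 => i _; exact: sqr_ge0. Qed.

Lemma sqnorm_eq0 n (v : 'rV[R]_n) : sqnorm v = 0 -> v = 0.
Proof.
move=> /eqP; rewrite /sqnorm psumr_eq0 => [/allP H|i _]; last exact: sqr_ge0.
apply/rowP => i; rewrite mxE; apply/eqP; rewrite -sqrf_eq0.
by apply: (implyP (H i (mem_index_enum i))).
Qed.

Lemma sqnormD n (u v : 'rV[R]_n) : u *m v^T = 0 ->
  sqnorm (u + v) = sqnorm u + sqnorm v.
Proof.
move=> uv; rewrite !sqnormE linearD /= mulmxDl !mulmxDr uv.
have -> : v *m u^T = (u *m v^T)^T by rewrite trmx_mul trmxK.
by rewrite uv trmx0 !mxE addr0 add0r.
Qed.

Lemma gram_unit k n (E : 'M[R]_(k,n)) : row_free E -> E *m E^T \in unitmx.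
Proof.
move=> fE; rewrite -row_free_unit; apply: inj_row_free => v vG.
have : sqnorm (v *m E) = 0.
  by rewrite sqnormE trmx_mul !mulmxA -(mulmxA v) vG mul0mx mxE.
by move/sqnorm_eq0/eqP; rewrite mulmx_free_eq0 // => /eqP.
Qed.

Definition proj n k (a : 'rV[R]_n) (E : 'M[R]_(k,n)) : 'rV[R]_n :=
  a - a *m E^T *m invmx (E *m E^T) *m E.

Lemma proj_in n k (a : 'rV[R]_n) (E : 'M[R]_(k,n)) : aplane a E (proj a E).
Proof.
rewrite /aplane /proj /= addrC addKr -mulNmx; exact: submxMl.
Qed.

Lemma proj_orth n k (a : 'rV[R]_n) (E : 'M[R]_(k,n)) : row_free E ->
  proj a E *m E^T = 0.
Proof.
move=> fE; rewrite /proj mulmxBl -!mulmxA mulVmx ?gram_unit // mulmx1.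
by rewrite subrr.
Qed.

Lemma sub_plane n k (a y z : 'rV[R]_n) (E : 'M[R]_(k,n)) :
  aplane a E y -> aplane a E z -> (y - z <= E)%MS.
Proof.
rewrite /aplane /= => Hy Hz.
have -> : y - z = (y - a) + (- (z - a)) by rewrite opprB addrA subrK.
by apply: addmx_sub => //; rewrite eqmx_opp.
Qed.

Lemma proj_min n k (a z : 'rV[R]_n) (E : 'M[R]_(k,n)) : row_free E ->
  aplane a E z -> sqnorm z = sqnorm (proj a E) + sqnorm (z - proj a E).
Proof.
move=> fE Hz; rewrite -sqnormD; first by rewrite addrC subrK.
have /submxP [D ->] := sub_plane Hz (proj_in a E).
by rewrite trmx_mul mulmxA proj_orth // mul0mx.
Qed.

Lemma proj_uniq n k (a z : 'rV[R]_n) (E : 'M[R]_(k,n)) : row_free E ->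
  aplane a E z -> (forall w, aplane a E w -> sqnorm z <= sqnorm w) ->
  z = proj a E.
Proof.
move=> fE Hz Hmin.
have := Hmin _ (proj_in a E); rewrite (proj_min fE Hz) => H.
have H0 : sqnorm (z - proj a E) = 0.
  apply/eqP; rewrite eq_le sqnorm_ge0 andbT.
  by rewrite -(lerD2l (sqnorm (proj a E))) addr0.
by apply/eqP; rewrite -subr_eq0; apply/eqP/sqnorm_eq0.
Qed.

Lemma same_plane n k (a b : 'rV[R]_n) (E F : 'M[R]_(k,n)) :
  same_oplane a E b F -> aplane a E = aplane b F.
Proof.
move=> [ba [M [dM ->]]].
have uM : M \in unitmx by rewrite unitmxE unitfE gt_eqF.
have EF : (E <= M *m E)%MS by rewrite -{1}(mulKmx uM E) submxMl.
rewrite /aplane; apply/seteqP; split => y /= Hy.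
- apply: submx_trans EF.
  have -> : y - b = (y - a) + (- (b - a)) by rewrite opprB addrA subrK.
  by apply: addmx_sub => //; rewrite eqmx_opp.
- have H : (y - b <= E)%MS by apply: submx_trans Hy _; exact: submxMl.
  have -> : y - a = (y - b) + (b - a) by rewrite addrA subrK.
  exact: addmx_sub.
Qed.

Lemma cvg_trmx {T} {F : set_system T} {FF : Filter F} m n (f : T -> 'M[R]_(m,n)) (A : 'M[R]_(m,n)) :
  f @ F --> A -> (fun x => (f x)^T) @ F --> A^T.
Proof.
move=> Hf; apply: mx_cvgP => i j; rewrite mxE; under eq_cvg do rewrite mxE.
exact: entry_cvg.
Qed.

Lemma uq n k (a b z1 z2 : 'rV[R]_n) (E E0 : 'M[R]_(k,n)) :
  E *m E0^T \in unitmx -> aplane a E z1 -> aplane a E z2 ->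
  (z1 - b) *m E0^T = 0 -> (z2 - b) *m E0^T = 0 -> z1 = z2.
Proof.
move=> uH H1 H2 o1 o2.
have /submxP [D eD] := sub_plane H1 H2.
have : D *m (E *m E0^T) = 0.
  rewrite mulmxA -eD.
  have -> : z1 - z2 = (z1 - b) - (z2 - b) by rewrite opprB addrA subrK.
  by rewrite mulmxBl o1 o2 subrr.
move=> /(congr1 (mulmx^~ (invmx (E *m E0^T)))); rewrite mul0mx mulmxK // => D0.
by apply/eqP; rewrite -subr_eq0 eD D0 mul0mx.
Qed.

Definition gpt n k (a b : 'rV[R]_n) (E E0 : 'M[R]_(k,n)) : 'rV[R]_n :=
  a + (b - a) *m E0^T *m invmx (E *m E0^T) *m E.

Lemma gpt_in n k (a b : 'rV[R]_n) (E E0 : 'M[R]_(k,n)) : aplane a E (gpt a b E E0).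
Proof. by rewrite /aplane /gpt /= addrC addKr submxMl. Qed.

Lemma gpt_orth n k (a b : 'rV[R]_n) (E E0 : 'M[R]_(k,n)) : E *m E0^T \in unitmx ->
  (gpt a b E E0 - b) *m E0^T = 0.
Proof.
move=> uH; rewrite /gpt mulmxBl mulmxDl -!(mulmxA _ _ E0^T) -(mulmxA _ (invmx _)).
rewrite mulVmx // mulmx1 mulmxBl.
by rewrite addrCA subrr addr0 subrr.
Qed.
End S.

Section Fib.
Variables (R : realType) (n k : nat).
Implicit Types (L : 'rV[R]_n -> 'rV[R]_n * 'M[R]_(k, n)) (p : 'rV[R]_n -> 'rV[R]_n).

Lemma p_proj L p : oriented_affine_fibration L -> nearest_point_map L p ->
  forall x, p x = proj (L x).1 (L x).2.
Proof.
move=> [Hrf Hin Hsame Hloc] Hp x; case: (Hp x) => H1 H2.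
exact: proj_uniq (Hrf x) H1 H2.
Qed.

Lemma plane_eq L : oriented_affine_fibration L -> forall x y z,
  aplane (L x).1 (L x).2 z -> aplane (L y).1 (L y).2 z ->
  aplane (L x).1 (L x).2 = aplane (L y).1 (L y).2.
Proof.
move=> [Hrf Hin Hsame Hloc] x y z Hx Hy; apply: same_plane; apply: Hsame.
by exists z.
Qed.

Lemma p_same L p : oriented_affine_fibration L -> nearest_point_map L p ->
  forall x w, aplane (L x).1 (L x).2 w -> p w = p x.
Proof.
move=> HL Hp x w Hw.
have [Hrf Hin _ _] := HL.
have E := plane_eq HL (Hin w) Hw.
rewrite (p_proj HL Hp x); case: (Hp w) => H1 H2.
apply: proj_uniq (Hrf x) _ _; rewrite -E //.
Qed.

Lemma p_idem L p : oriented_affine_fibration L -> nearest_point_map L p ->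
  forall x, p (p x) = p x.
Proof. by move=> HL Hp x; apply: (p_same HL Hp); case: (Hp x). Qed.

Lemma p_cont L p : oriented_affine_fibration L -> nearest_point_map L p ->
  continuous p.
Proof.
move=> HL Hp; suff H : forall x0 : 'rV[R]_n, p @ x0 --> p x0 by move=> x; exact: H.
move=> x0; have [Hrf Hin Hsame Hloc] := HL.
case: (Hloc x0) => U [oU Ux0 [a [E [ca cE HU]]]].
rewrite continuous_open_subspace // in ca.
rewrite continuous_open_subspace // in cE.
have ex y : U y -> p y = proj (a y) (E y).
  move=> Uy; case: (HU y Uy) => fE Hs; have Pe := same_plane Hs.
  case: (Hp y) => H1 H2; apply: proj_uniq fE _ _; rewrite -Pe //.
have nU : nbhs x0 U by rewrite openE in oU; exact: oU.
have ca0 : a @ x0 --> a x0 := ca x0 (mem_set Ux0).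
have cE0 : E @ x0 --> E x0 := cE x0 (mem_set Ux0).
have fE0 := (HU x0 Ux0).1.
suff Hc : (fun y => proj (a y) (E y)) @ x0 --> proj (a x0) (E x0).
  have ev : \forall y \near x0, proj (a y) (E y) = p y.
    by apply: filterS nU => y Uy; exact/esym/ex.
  rewrite (ex _ Ux0); apply: cvg_trans Hc; exact: near_eq_cvg ev.
rewrite /proj.
suff H1 : (fun y => a y *m (E y)^T *m invmx (E y *m (E y)^T) *m E y) @ x0 -->
   a x0 *m (E x0)^T *m invmx (E x0 *m (E x0)^T) *m E x0.
  exact: (@cvgB _ _ _ _ _ a _ _ _ ca0 H1).
have FF0 : Filter (nbhs x0) by typeclasses eauto.
have h1 := @cvg_trmx R _ (nbhs x0) FF0 _ _ _ _ cE0.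
have h2 := @cvg_mulmx R _ (nbhs x0) FF0 _ _ _ _ _ _ _ ca0 h1.
have h3 := @cvg_mulmx R _ (nbhs x0) FF0 _ _ _ _ _ _ _ cE0 h1.
have h4 := @cvg_invmx R _ (nbhs x0) FF0 _ _ _ (gram_unit fE0) h3.
have h5 := @cvg_mulmx R _ (nbhs x0) FF0 _ _ _ _ _ _ _ h2 h4.
exact: (@cvg_mulmx R _ (nbhs x0) FF0 _ _ _ _ _ _ _ h5 cE0).
Qed.

Lemma range_connected L p : oriented_affine_fibration L -> nearest_point_map L p ->
  connected (range p).
Proof.
move=> HL Hp; have pc := p_cont HL Hp.
have -> : range p = \bigcup_(x in [set: 'rV[R]_n]) ((fun t : R => p (t *: x)) @` `[0, 1]).
  apply/seteqP; split => y.
    move=> [x _ <-]; exists x => //; exists 1; last by rewrite scale1r.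
    by rewrite /= in_itv /= lexx ler01.
  by move=> [x _ [t _ <-]]; exists (t *: x).
apply: bigcup_connected.
  exists (p 0) => x _; exists 0; last by rewrite scale0r.
  by rewrite /= in_itv /= lexx ler01.
move=> x _; apply: connected_continuous_connected; first exact: segment_connected.
apply: continuous_subspaceT => t.
apply: continuous_comp; last exact: pc.
by apply: continuousZr_tmp.
Qed.

Lemma range_contractible L p : oriented_affine_fibration L -> nearest_point_map L p ->
  contractible R (range p).
Proof.
move=> HL Hp; have pc := p_cont HL Hp.
exists (p 0), (fun tx : R * 'rV[R]_n => p ((1 - tx.1) *: tx.2)); split.
- by exists 0.
- apply: continuous_subspaceT => tx.
  apply: continuous_comp; last exact: pc.
  apply: continuousZ; last exact: cvg_snd.
  by apply: cvgB; [exact: cvg_cst | exact: cvg_fst].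
- by move=> t x _ _; exists ((1 - t) *: x).
- move=> x [z _ <-]; rewrite /= subr0 subrr scale1r scale0r; split => //.
  exact: (p_idem HL Hp).
Qed.

Lemma range_manifold L p : oriented_affine_fibration L -> nearest_point_map L p ->
  top_submanifold (n - k)%N (range p).
Proof.
move=> HL Hp; have pc := p_cont HL Hp; have [Hrf Hin Hsame Hloc] := HL.
move=> b Ab.
have pb : p b = b by case: Ab => x _ <-; exact: (p_idem HL Hp).
set E0 := (L b).2.
have fE0 : row_free E0 := Hrf b.
case: (Hloc b) => U1 [oU1 U1b [a [E [ca cE HU]]]].
rewrite continuous_open_subspace // in ca.
rewrite continuous_open_subspace // in cE.
have Pl y : U1 y -> aplane (L y).1 (L y).2 = aplane (a y) (E y).
  by move=> U1y; apply: same_plane; exact: (HU y U1y).2.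
have uHb : E b *m E0^T \in unitmx.
  case: (HU b U1b) => _ [_ [M [dM eM]]].
  rewrite eM -mulmxA unitmx_mul; apply/andP; split; last exact: gram_unit.
  by rewrite unitmxE unitfE gt_eqF.
set U0 := [set y | U1 y /\ \det (E y *m E0^T) != 0].
have HE y : U1 y -> E @ y --> E y.
  by move=> U1y; exact: (cE y (mem_set U1y)).
have Ha y : U1 y -> a @ y --> a y.
  by move=> U1y; exact: (ca y (mem_set U1y)).
have oU0 : open U0.
  rewrite openE => y [U1y dy].
  have FF0 : Filter (nbhs y) by typeclasses eauto.
  have h1 := @cvg_mulmx R _ (nbhs y) FF0 _ _ _ _ (fun=> E0^T) _ _ (HE y U1y) (@cvg_cst _ E0^T _ (nbhs y) FF0).
  have h2 := @cvg_det R _ (nbhs y) FF0 _ _ _ h1.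
  have ev := @cvgr_neq0 _ _ _ _ FF0 _ _ h2 dy.
  have nU1 : nbhs y U1 by rewrite openE in oU1; exact: oU1.
  by apply: filterS (filterI nU1 ev) => z [? ?]; split.
have unitU0 y : U0 y -> E y *m E0^T \in unitmx.
  by move=> [_ dy]; rewrite unitmxE unitfE.
set g := fun y => gpt (a y) b (E y) E0.
have gin y : U0 y -> aplane (L y).1 (L y).2 (g y).
  by move=> [U1y _]; rewrite Pl //; exact: gpt_in.
have gorth y : U0 y -> (g y - b) *m E0^T = 0.
  by move=> U0y; apply: gpt_orth; exact: unitU0.
have U0b : U0 b by split => //; rewrite -unitfE -unitmxE.
have gb : g b = b.
  apply: (uq (a := a b) (b := b) (E := E b) (E0 := E0)).
  - exact: unitU0.
  - exact: gpt_in.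
  - by rewrite -Pl //.
  - exact: gorth.
  - by rewrite subrr mul0mx.
have gc y : U0 y -> g @ y --> g y.
  move=> U0y; have [U1y _] := U0y.
  have FF0 : Filter (nbhs y) by typeclasses eauto.
  have h0 := @cvgB _ _ _ (nbhs y) FF0 (fun=> b) a _ _ (@cvg_cst _ b _ (nbhs y) FF0) (Ha y U1y).
  have h1 := @cvg_mulmx R _ (nbhs y) FF0 _ _ _ _ (fun=> E0^T) _ _ h0 (@cvg_cst _ E0^T _ (nbhs y) FF0).
  have h2 := @cvg_mulmx R _ (nbhs y) FF0 _ _ _ _ (fun=> E0^T) _ _ (HE y U1y) (@cvg_cst _ E0^T _ (nbhs y) FF0).
  have h3 := @cvg_invmx R _ (nbhs y) FF0 _ _ _ (unitU0 y U0y) h2.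
  have h4 := @cvg_mulmx R _ (nbhs y) FF0 _ _ _ _ _ _ _ h1 h3.
  have h5 := @cvg_mulmx R _ (nbhs y) FF0 _ _ _ _ _ _ _ h4 (HE y U1y).
  exact: (@cvgD _ _ _ (nbhs y) FF0 _ _ _ _ (Ha y U1y) h5).
set U := [set y | U0 y /\ U0 (g y)].
have oU : open U.
  rewrite openE => y [U0y U0gy].
  have nU0 : nbhs y U0 by rewrite openE in oU0; exact: oU0.
  have nU0g : nbhs (g y) U0 by rewrite openE in oU0; exact: oU0.
  have := gc y U0y _ nU0g => ng.
  by apply: filterS (filterI nU0 ng) => z [? ?]; split.
have Ub : U b by split => //; rewrite gb.
set K := kermx E0^T.
have rK : \rank K = (n - k)%N.
  by rewrite mxrank_ker mxrank_tr (eqP fE0).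
set B : 'M[R]_(n - k, n) := castmx (rK, erefl n) (row_base K).
have fB : row_free B.
  by rewrite /row_free (eqmx_cast _ _) eq_row_base rK.
have BK m (u : 'M[R]_(m, n)) : (u <= B)%MS = (u *m E0^T == 0).
  by rewrite (eqmx_cast _ _) eq_row_base sub_kermx.
set f := fun v : 'rV[R]_(n - k) => b + v *m B.
have fc : continuous f.
  move=> v; have FF0 : Filter (nbhs v) by typeclasses eauto.
  have h1 := @cvg_mulmx R _ (nbhs v) FF0 _ _ _ id (fun=> B) _ _ (@cvg_id _ (nbhs v)) (@cvg_cst _ B _ (nbhs v) FF0).
  exact: (@cvgD _ _ _ (nbhs v) FF0 _ _ _ _ (@cvg_cst _ b _ (nbhs v) FF0) h1).
have pf : continuous (p \o f) by move=> v; apply: continuous_comp; [exact: fc | exact: pc].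
have Ay y : range p y -> p y = y by case=> x _ <-; exact: (p_idem HL Hp).
exists U, (f @^-1` U0 `&` (p \o f) @^-1` U), (p \o f),
  (fun y => (g y - b) *m pinvmx B); split.
- by split.
- apply: openI; apply: open_comp => //; by move=> z _; [exact: fc | exact: pf].
- split; first exact: continuous_subspaceT.
  apply: continuous_in_subspaceT => y /set_mem [_ [U0y _]].
  have FF0 : Filter (nbhs y) by typeclasses eauto.
  have h0 := @cvgB _ _ _ (nbhs y) FF0 g (fun=> b) _ _ (gc y U0y) (@cvg_cst _ b _ (nbhs y) FF0).
  exact: (@cvg_mulmx R _ (nbhs y) FF0 _ _ _ _ (fun=> pinvmx B) _ _ h0 (@cvg_cst _ (pinvmx B) _ (nbhs y) FF0)).
- move=> v [/= U0w [U0y U0gy]].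
  split; first by split; [exists (f v) | split].
  set w := f v; set y := p w.
  have U1y : U1 y by case: U0y.
  have gw : g y = w.
    apply: (uq (a := a y) (b := b) (E := E y) (E0 := E0)).
    - exact: unitU0.
    - exact: gpt_in.
    - rewrite -Pl // (plane_eq HL (Hin y) (proj1 (Hp w))); exact: Hin.
    - exact: gorth.
    - by rewrite /w /f addrC addKr; apply/eqP; rewrite -BK submxMl.
  by rewrite gw /w /f addrC addKr (mulmxKp fB).
- move=> y [Ay' [U0y U0gy]].
  have dB : (g y - b <= B)%MS by rewrite BK; apply/eqP; exact: gorth.
  have fg : f ((g y - b) *m pinvmx B) = g y by rewrite /f (mulmxKpV dB) addrC subrK.
  have pg : p (g y) = y by rewrite (p_same HL Hp (gin y U0y)) Ay.
  rewrite /= fg pg; split => //; split => //=; rewrite fg // pg; by split.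
Qed.
End Fib.

Unset Implicit Arguments.

Theorem lemma3p1 (R : realType) (n k : nat)
    (L : 'rV[R]_n -> 'rV[R]_n * 'M[R]_(k, n)) (p : 'rV[R]_n -> 'rV[R]_n) :
  oriented_affine_fibration L -> nearest_point_map L p ->
  connected (range p) /\ contractible R (range p) /\
  top_submanifold (n - k)%N (range p).
Proof.
move=> HL Hp; split; first exact: range_connected HL Hp.
split; first exact: range_contractible HL Hp.
exact: range_manifold HL Hp.
Qed.
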